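(* Let $\mathcal{E}=\{e_1,\dots,e_n\}$ be an orthonormal basis for $\mathbb{R}^n$ and let $M$ be a $k$-dimensional $\mathcal{E}$-PR subspace. Then for every nonzero $x\in M$, $|\mathrm{supp}(x)|\ge k$.
   Context: For $x=\sum_{i=1}^n\alpha_ie_i$, $\mathrm{supp}(x)=\{i:\alpha_i\neq0\}$ and $|\cdot|$ denotes cardinality. A subspace $M$ is an $\mathcal{E}$-PR subspace if $\{P_Me_i\}_{i=1}^n$ (with $P_M$ the orthogonal projection onto $M$) spans $M$ and whenever $x,y\in M$ satisfy $|\langle x,P_Me_i\rangle|=|\langle y,P_Me_i\rangle|$ for all $i$, then $x=\pm y$. *)

(* Defs.v *)
(* R : realType (the real numbers), vectors in R^n are 'rV[R]_n,
   subspaces are represented by row spaces of matrices (mxalgebra). *)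
From HB Require Import structures.
From mathcomp Require Import all_boot all_order all_algebra.
From mathcomp Require Import reals.
Set Implicit Arguments. Unset Strict Implicit. Unset Printing Implicit Defensive.
Import Order.TTheory GRing.Theory Num.Theory.
Local Open Scope ring_scope.

Definition dotv {R : realType} {n : nat} (u v : 'rV[R]_n) : R :=
  \sum_(j < n) u 0 j * v 0 j.

(* An orthonormal family of n vectors in R^n (hence an orthonormal basis). *)
Definition orthonormal_family {R : realType} {n : nat} (e : 'I_n -> 'rV[R]_n) : Prop :=
  forall i j, dotv (e i) (e j) = (i == j)%:R.

Definition orth_proj {R : realType} {n : nat} (M : 'M[R]_n) : 'M[R]_n :=
  let B := row_base M in (B^T *m invmx (B *m B^T)) *m B.

Definition PM {R : realType} {n : nat} (M : 'M[R]_n) (v : 'rV[R]_n) : 'rV[R]_n :=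
  v *m orth_proj M.

(* Support of x with respect to the orthonormal basis e:
   x = \sum_i alpha_i e_i with alpha_i = <x, e_i>. *)
Definition supp {R : realType} {n : nat} (e : 'I_n -> 'rV[R]_n) (x : 'rV[R]_n)
  : {set 'I_n} := [set i | dotv x (e i) != 0].

Definition PR_subspace {R : realType} {n : nat} (e : 'I_n -> 'rV[R]_n)
  (M : 'M[R]_n) : Prop :=
  (\matrix_(i < n, j < n) (PM M (e i)) 0 j == M)%MS /\
  (forall x y : 'rV[R]_n, (x <= M)%MS -> (y <= M)%MS ->
     (forall i, `|dotv x (PM M (e i))| = `|dotv y (PM M (e i))|) ->
     x = y \/ x = - y).

(* Main.v *)
Require Import Defs.
From HB Require Import structures.
From mathcomp Require Import all_boot all_order all_algebra.
From mathcomp Require Import reals.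
Import Order.TTheory GRing.Theory Num.Theory.
Local Open Scope ring_scope.

Lemma dotvE (R : realType) n (u v : 'rV[R]_n) : dotv u v = (u *m v^T) 0 0.
Proof. by rewrite /dotv !mxE; apply: eq_bigr => j _; rewrite !mxE. Qed.

Lemma BBt_unit (R : realType) r n (B : 'M[R]_(r, n)) :
  row_free B -> B *m B^T \in unitmx.
Proof.
move=> fB; rewrite -row_free_unit -kermx_eq0; apply/rowV0P => v.
move/sub_kermxP; rewrite mulmxA => h.
have h2 : (v *m B) *m (v *m B)^T = 0 by rewrite trmx_mul mulmxA h mul0mx.
have : v *m B = 0.
  apply/matrixP => i j; rewrite (ord1 i) [RHS]mxE.
  have := congr1 (fun M : 'M[R]_1 => M 0 0) h2; rewrite /= !mxE => s.
  have : (v *m B) 0 j * (v *m B) 0 j = 0.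
    have P0 : forall l : 'I_n, true -> 0 <= (v *m B) 0 l * (v *m B)^T l 0.
      by move=> l _; rewrite [X in _ * X]mxE -expr2 sqr_ge0.
    have := @psumr_eq0P _ _ _ _ P0 s j isT. rewrite [X in _ * X = _ -> _]mxE. done.
  by move/eqP; rewrite mulf_eq0 orbb => /eqP; rewrite mxE.
by move=> vB0; apply: (row_free_inj fB); rewrite /= vB0 mul0mx.
Qed.

Lemma proj_tr (R : realType) n (M : 'M[R]_n) : (orth_proj M)^T = orth_proj M.
Proof.
rewrite /orth_proj /=; move: (row_base M) => B.
by rewrite !trmx_mul trmx_inv trmx_mul trmxK mulmxA.
Qed.

Lemma proj_id (R : realType) n (M : 'M[R]_n) (y : 'rV[R]_n) :
  (y <= M)%MS -> y *m orth_proj M = y.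
Proof.
move=> yM; have yB : (y <= row_base M)%MS by rewrite eq_row_base.
have fB := row_base_free M.
rewrite /orth_proj /=; move: (row_base M) fB yB => B fB yB.
rewrite -(mulmxKpV yB) !mulmxA -(mulmxA _ B B^T).
rewrite -(mulmxA _ (B *m B^T)) mulmxV ?mul1mx ?mulmx1 //.
exact/BBt_unit.
Qed.

Lemma dotv_PM (R : realType) n (M : 'M[R]_n) (y v : 'rV[R]_n) :
  (y <= M)%MS -> dotv y (PM M v) = dotv y v.
Proof.
move=> yM; rewrite !dotvE /PM trmx_mul proj_tr mulmxA proj_id //.
Qed.

Lemma dotvD (R : realType) n (u v w : 'rV[R]_n) : dotv (u + v) w = dotv u w + dotv v w.
Proof. by rewrite /dotv -big_split; apply: eq_bigr => j _; rewrite mxE mulrDl. Qed.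

Lemma dotvN (R : realType) n (u w : 'rV[R]_n) : dotv (- u) w = - dotv u w.
Proof. by rewrite /dotv -sumrN; apply: eq_bigr => j _; rewrite mxE mulNr. Qed.

Lemma vNv (R : realType) n (v : 'rV[R]_n) : v = - v -> v = 0.
Proof.
move=> h; apply/eqP.
have : (2%:R : R) *: v == 0 by rewrite scaler_nat mulr2n {1}h addNr.
by rewrite scaler_eq0 pnatr_eq0.
Qed.

Theorem proposition4p1 (R : realType) (n k : nat) (e : 'I_n -> 'rV[R]_n)
  (M : 'M[R]_n) :
  orthonormal_family e -> \rank M = k -> PR_subspace e M ->
  forall x : 'rV[R]_n, (x <= M)%MS -> x != 0 -> (k <= #|supp e x|)%N.
Proof.
move=> _ rk [_ PR] x xM x0.
rewrite -rk; set S := supp e x.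
rewrite leqNgt; apply/negP => ltS.
pose E := \matrix_(j < n, l < n) (if j \in S then e j 0 l else 0) : 'M[R]_n.
have rE : (\rank E <= #|S|)%N.
  have sub : (E <= \sum_(j in S) <<e j>>)%MS.
    apply/row_subP => j; case: (boolP (j \in S)) => jS.
      apply: (sumsmx_sup j) => //; rewrite genmxE.
      have -> : row j E = e j by apply/rowP => l; rewrite !mxE jS.
      exact: submx_refl.
    have -> : row j E = 0 by apply/rowP => l; rewrite !mxE (negbTE jS).
    exact: sub0mx.
  apply: leq_trans (mxrankS sub) _.
  rewrite -sum1_card.
  apply: (big_rec2 (fun A m => \rank A <= m)%N); first by rewrite mxrank0.
  move=> j A m _ hA.
  apply: leq_trans (mxrank_adds_leqif _ _) _.
  by rewrite genmxE; apply: leq_add (rank_leq_row _) hA.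
pose B := row_base M.
pose D := B *m E^T.
have rD : (\rank D < \rank M)%N.
  apply: leq_ltn_trans (mxrankM_maxr _ _) _.
  by rewrite mxrank_tr; apply: leq_ltn_trans rE ltS.
have : kermx D != 0 by rewrite -mxrank_eq0 mxrank_ker subn_eq0 -ltnNge.
case/rowV0Pn => c /sub_kermxP cD c0.
have fB : row_free B by exact: row_base_free.
have w0 : c *m B != 0.
  apply: contraNneq c0 => h; apply/eqP; apply: (@row_free_inj _ 1 _ _ B fB); by rewrite /= h mul0mx.
have wM : (c *m B <= M)%MS.
  by apply: submx_trans (submxMl _ _) _; rewrite eq_row_base.
have wE : (c *m B) *m E^T = 0 by rewrite -mulmxA.
move: (c *m B) w0 wM wE => w w0 wM wE.
have wS : forall j, j \in S -> dotv w (e j) = 0.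
  move=> j jS; have := congr1 (fun A : 'rV[R]_n => A 0 j) wE.
  rewrite !mxE /dotv => h; rewrite -[RHS]h; apply: eq_bigr => l _; rewrite !mxE jS.
  done.
have xS : forall j, j \notin S -> dotv x (e j) = 0.
  by move=> j; rewrite inE negbK => /eqP.
have := PR (x + w) (x - w).
case.
- exact: addmx_sub.
- by apply: addmx_sub; rewrite ?eqmx_opp.
- move=> i; rewrite !dotv_PM ?addmx_sub ?eqmx_opp // !dotvD !dotvN.
  case: (boolP (i \in S)) => iS.
    by rewrite wS // oppr0 !addr0.
  by rewrite xS // !add0r normrN.
- move/addrI => h; move/negP: w0; apply; apply/eqP; exact: vNv.
- rewrite opprB [LHS]addrC => /addrI h; move/negP: x0; apply; apply/eqP; exact: vNv.
Qed.
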